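(* Let $\mathcal H_S,\mathcal H_M$ be finite-dimensional complex Hilbert spaces and let $\Psi=\sum_{t}\mu_t\,\phi_t\otimes\lambda_t$ be a unit vector in $\mathcal H_S\otimes\mathcal H_M$, where the sum is finite, the $\phi_t\in\mathcal H_S$ and $\lambda_t\in\mathcal H_M$ are unit vectors, the $\mu_t$ are nonzero complex numbers, and $\Pr(\phi_t)>0$ for all $t$. (a) If the vectors $\{\lambda_j\}$ are all collinear, then the $\{\phi_j\}$ are indistinguishable relative to $M$. (b) If the vectors $\{\phi_j\}$ are linearly independent and indistinguishable relative to $M$, then the $\{\lambda_j\}$ are all collinear, i.e. $\lambda_j=e^{i\theta_j}\Lambda$ for a single unit vector $\Lambda$ and real phases $\theta_j$.
   Context: For the pure joint state $\Psi$ with $\rho_S=\mathrm{Tr}_M|\Psi\rangle\langle\Psi|$, and unit vectors $\phi\in\mathcal H_S$, $\eta\in\mathcal H_M$: $\Pr(\phi)=\langle\phi|\rho_S|\phi\rangle$, $\Pr(\phi\wedge\eta)=|\langle\phi\otimes\eta|\Psi\rangle|^2$, $\Pr(\eta\mid\phi)=\Pr(\phi\wedge\eta)/\Pr(\phi)$. Values $\{\phi_j\}$ of $S$ are indistinguishable relative to $M$ iff $\Pr(\eta\mid\phi_j)$ is independent of $j$ for every unit vector $\eta\in\mathcal H_M$. *)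

(* Defs.v *)
(* H_S = 'cV[C]_n, H_M = 'cV[C]_m; H_S (x) H_M is identified with the
   space of n x m coefficient matrices, u (x) v  <->  u *m v^T. *)
From mathcomp Require Import all_boot all_order all_algebra.
Set Implicit Arguments. Unset Strict Implicit. Unset Printing Implicit Defensive.
Import Order.TTheory GRing.Theory Num.Theory.
Local Open Scope ring_scope.

Section QM.
Variable C : numClosedFieldType.

Definition dotc (n : nat) (u v : 'cV[C]_n) : C := \sum_(i < n) (u i 0)^* * v i 0.

Definition unit_vec (n : nat) (u : 'cV[C]_n) : Prop := dotc u u = 1.

Definition tens (n m : nat) (u : 'cV[C]_n) (v : 'cV[C]_m) : 'M[C]_(n, m) :=
  u *m v^T.

Definition dotT (n m : nat) (A B : 'M[C]_(n, m)) : C :=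
  \sum_(i < n) \sum_(j < m) (A i j)^* * B i j.

Definition unit_state (n m : nat) (Psi : 'M[C]_(n, m)) : Prop := dotT Psi Psi = 1.

(* rho_S = Tr_M |Psi><Psi| *)
Definition rhoS (n m : nat) (Psi : 'M[C]_(n, m)) : 'M[C]_n :=
  \matrix_(i < n, i' < n) \sum_(j < m) Psi i j * (Psi i' j)^*.

Definition PrS (n m : nat) (Psi : 'M[C]_(n, m)) (phi : 'cV[C]_n) : C :=
  \sum_(i < n) \sum_(i' < n) (phi i 0)^* * rhoS Psi i i' * phi i' 0.

Definition PrSM (n m : nat) (Psi : 'M[C]_(n, m)) (phi : 'cV[C]_n) (eta : 'cV[C]_m) : C :=
  `| dotT (tens phi eta) Psi | ^+ 2.

Definition Prcond (n m : nat) (Psi : 'M[C]_(n, m)) (eta : 'cV[C]_m) (phi : 'cV[C]_n) : C :=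
  PrSM Psi phi eta / PrS Psi phi.

Definition indist (n m k : nat) (Psi : 'M[C]_(n, m)) (phi : 'I_k -> 'cV[C]_n) : Prop :=
  forall eta : 'cV[C]_m, unit_vec eta ->
    forall j j' : 'I_k, Prcond Psi eta (phi j) = Prcond Psi eta (phi j').

Definition collinear (m k : nat) (lam : 'I_k -> 'cV[C]_m) : Prop :=
  exists v : 'cV[C]_m, forall j, exists c : C, lam j = c *: v.

Definition lin_indep (n k : nat) (phi : 'I_k -> 'cV[C]_n) : Prop :=
  forall c : 'I_k -> C, \sum_(t < k) c t *: phi t = 0 -> forall t, c t = 0.

End QM.

(* Main.v *)
Require Import Defs.
From mathcomp Require Import all_boot all_order all_algebra.
From mathcomp Require Import ring.
Set Implicit Arguments. Unset Strict Implicit.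
Import Order.TTheory GRing.Theory Num.Theory.
Local Open Scope ring_scope.

Section Aux.
Variable C : numClosedFieldType.
Implicit Types a b : C.

Lemma dotc_sumr n (u : 'cV[C]_n) I (r : seq I) (P : pred I) (f : I -> 'cV[C]_n) :
  dotc u (\sum_(t <- r | P t) f t) = \sum_(t <- r | P t) dotc u (f t).
Proof.
rewrite /dotc exchange_big /=; apply: eq_bigr => i _.
by rewrite summxE mulr_sumr.
Qed.

Lemma dotcZr n (u v : 'cV[C]_n) a : dotc u (a *: v) = a * dotc u v.
Proof. by rewrite /dotc mulr_sumr; apply: eq_bigr => i _; rewrite mxE mulrCA. Qed.

Lemma dotcZl n (u v : 'cV[C]_n) a : dotc (a *: u) v = a^* * dotc u v.
Proof. by rewrite /dotc mulr_sumr; apply: eq_bigr => i _; rewrite mxE rmorphM mulrA. Qed.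

Lemma dotcDr n (u v w : 'cV[C]_n) : dotc u (v + w) = dotc u v + dotc u w.
Proof. by rewrite /dotc -big_split; apply: eq_bigr => i _; rewrite mxE mulrDr. Qed.

Lemma dotcBr n (u v w : 'cV[C]_n) : dotc u (v - w) = dotc u v - dotc u w.
Proof. by rewrite /dotc -sumrB; apply: eq_bigr => i _; rewrite !mxE mulrBr. Qed.

Lemma dotcC n (u v : 'cV[C]_n) : dotc v u = (dotc u v)^*.
Proof. by rewrite /dotc rmorph_sum; apply: eq_bigr => i _; rewrite rmorphM /= conjCK mulrC. Qed.

Lemma dotc_ge0 n (u : 'cV[C]_n) : 0 <= dotc u u.
Proof. by apply: sumr_ge0 => i _; rewrite mulrC mul_conjC_ge0. Qed.

Lemma dotc_eq0 n (u : 'cV[C]_n) : dotc u u = 0 -> u = 0.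
Proof.
move=> /eqP; rewrite /dotc psumr_eq0 => [/allP H|i _]; last by rewrite mulrC mul_conjC_ge0.
apply/matrixP => i j; rewrite ord1 mxE.
have := H i (mem_index_enum _); rewrite mulrC mul_conjC_eq0 => /eqP //.
Qed.

Lemma dotc0r n (u : 'cV[C]_n) : dotc u 0 = 0.
Proof. by rewrite /dotc big1 // => i _; rewrite mxE mulr0. Qed.

Lemma normalize n (u : 'cV[C]_n) : u != 0 ->
  exists a : C, a != 0 /\ unit_vec (a *: u).
Proof.
move=> nz; have d0 : dotc u u != 0 by apply: contra nz => /eqP/dotc_eq0 ->.
have dg : 0 < dotc u u by rewrite lt_def d0 dotc_ge0.
exists (sqrtC (dotc u u)^-1); split.
  by rewrite sqrtC_eq0 invr_eq0.
rewrite /unit_vec dotcZl dotcZr mulrA geC0_conj ?sqrtC_ge0 ?invr_ge0 ?dotc_ge0 //.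
by rewrite -expr2 sqrtCK mulVf.
Qed.


Lemma dotc0l n (u : 'cV[C]_n) : dotc 0 u = 0.
Proof. by rewrite /dotc big1 // => i _; rewrite mxE rmorph0 mul0r. Qed.

Definition hv n m (Psi : 'M[C]_(n, m)) (p : 'cV[C]_n) : 'cV[C]_m :=
  \col_j \sum_(i < n) (p i 0)^* * Psi i j.

Lemma dotT_hv n m (Psi : 'M[C]_(n, m)) p (eta : 'cV[C]_m) :
  dotT (tens p eta) Psi = dotc eta (hv Psi p).
Proof.
rewrite /dotT /dotc exchange_big /=; apply: eq_bigr => j _.
rewrite mxE mulr_sumr; apply: eq_bigr => i _.
by rewrite /tens !mxE big_ord1 !mxE rmorphM mulrA [_ * (p i 0)^*]mulrC.
Qed.

Lemma PrS_hv n m (Psi : 'M[C]_(n, m)) p : PrS Psi p = dotc (hv Psi p) (hv Psi p).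
Proof.
rewrite /PrS /dotc.
under eq_bigr => i _ do under eq_bigr => i' _ do rewrite mxE mulr_sumr mulr_suml.
under eq_bigr => i _ do rewrite exchange_big /=.
rewrite exchange_big /=; apply: eq_bigr => j _.
rewrite !mxE rmorph_sum /= mulrC mulr_suml; apply: eq_bigr => i _.
rewrite mulr_sumr; apply: eq_bigr => i' _.
rewrite rmorphM /= conjCK.
ring.
Qed.

Lemma hv_sum n m k (mu : 'I_k -> C) (phi : 'I_k -> 'cV[C]_n) (lam : 'I_k -> 'cV[C]_m) p :
  hv (\sum_(t < k) mu t *: tens (phi t) (lam t)) p =
  \sum_(t < k) (mu t * dotc p (phi t)) *: lam t.
Proof.
apply/matrixP => j z; rewrite ord1 !mxE summxE.
under eq_bigr => i _ do rewrite summxE mulr_sumr.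
rewrite exchange_big /=; apply: eq_bigr => t _.
rewrite [in RHS]mxE /dotc mulr_sumr mulr_suml; apply: eq_bigr => i _.
by rewrite !mxE big_ord1 !mxE; ring.
Qed.

End Aux.

Theorem lemmaA1 (C : numClosedFieldType) (n m k : nat)
  (mu : 'I_k -> C) (phi : 'I_k -> 'cV[C]_n) (lam : 'I_k -> 'cV[C]_m)
  (Psi : 'M[C]_(n, m))
  (hPsi : Psi = \sum_(t < k) mu t *: tens (phi t) (lam t))
  (hunit : unit_state Psi)
  (hphi : forall t, unit_vec (phi t))
  (hlam : forall t, unit_vec (lam t))
  (hmu : forall t, mu t != 0)
  (hpos : forall t, 0 < PrS Psi (phi t)) :
  (collinear lam -> indist Psi phi) /\
  (lin_indep phi -> indist Psi phi ->
     exists Lam : 'cV[C]_m, unit_vec Lam /\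
       forall j, exists c : C, `|c| = 1 /\ lam j = c *: Lam).
Proof.
have hP : forall (eta : 'cV[C]_m) p,
    Prcond Psi eta p = `|dotc eta (hv Psi p)| ^+ 2 / dotc (hv Psi p) (hv Psi p).
  by move=> eta p; rewrite /Prcond /PrSM dotT_hv PrS_hv.
have hnz : forall t, dotc (hv Psi (phi t)) (hv Psi (phi t)) != 0.
  by move=> t; rewrite -PrS_hv gt_eqF ?hpos.
split.
  case=> v hv_; pose c j := projT1 (sig_eqW (hv_ j)).
  have hc : forall j, lam j = c j *: v by move=> j; rewrite /c; case: sig_eqW.
  have hg : forall p, hv Psi p = (\sum_(t < k) mu t * dotc p (phi t) * c t) *: v.
    move=> p; rewrite hPsi hv_sum scaler_suml; apply: eq_bigr => t _.
    by rewrite hc scalerA.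
  have key : forall eta j, Prcond Psi eta (phi j) = `|dotc eta v| ^+ 2 / dotc v v.
    move=> eta j; rewrite hP; have := hnz j; rewrite hg.
    set s := \sum_(t < k) _; rewrite dotcZl dotcZr dotcZr normrM exprMn [`|s| ^+ 2]normCKC.
    rewrite mulrA mulf_eq0 negb_or => /andP [hs hv0].
    move: hs; rewrite mulf_eq0 negb_or => /andP [hs1 hs2]; field; by rewrite hv0 hs2 hs1.
  by move=> eta _ j j'; rewrite !key.
move=> hli hind.
case: k mu phi lam hPsi hphi hlam hmu hpos hnz hli hind => [|k] mu phi lam hPsi hphi hlam hmu hpos hnz hli hind.
  have : dotT (0 : 'M[C]_(n, m)) 0 = 0.
    by rewrite /dotT big1 // => i _; rewrite big1 // => j _; rewrite mxE mulr0.
  by move: hunit; rewrite /unit_state hPsi big_ord0 => -> /eqP; rewrite oner_eq0.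
pose u := hv Psi (phi ord0).
have hu0 : dotc u u != 0 by exact: hnz.
have s1 : forall eta, dotc eta u = 0 -> forall j, dotc eta (hv Psi (phi j)) = 0.
  move=> eta he j; have [->|nz] := eqVneq eta 0; first by rewrite dotc0l.
  have [a [a0 ua]] := normalize nz.
  have := hind _ ua j ord0; rewrite !hP -/u (dotcZl eta u) he mulr0 normr0 expr0n /= mul0r.
  move/eqP; rewrite mulf_eq0 invr_eq0 (negbTE (hnz j)) orbF sqrf_eq0 normr_eq0.
  by rewrite dotcZl mulf_eq0 conjC_eq0 (negbTE a0) /= => /eqP.
have s2 : forall eta, dotc eta u = 0 -> forall t, dotc eta (lam t) = 0.
  move=> eta he; pose y t := mu t * dotc eta (lam t).
  pose z := \sum_(t < k.+1) y t *: phi t.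
  have hz : forall j, dotc (phi j) z = 0.
    move=> j; rewrite -(s1 eta he j) hPsi hv_sum dotc_sumr /z dotc_sumr.
    apply: eq_bigr => t _; rewrite dotcZr dotcZr /y; ring.
  have z0 : z = 0.
    apply: dotc_eq0; rewrite {1}/z dotc_sumr big1 // => t _.
    by rewrite dotcZr dotcC hz rmorph0 mulr0.
  move=> t; have := hli y z0 t; rewrite /y => /eqP; rewrite mulf_eq0 (negbTE (hmu t)) /=.
  by move/eqP.
have s3 : forall t, lam t = (dotc u (lam t) / dotc u u) *: u.
  move=> t; set c := _ / _; apply/eqP; rewrite -subr_eq0; apply/eqP.
  set r := lam t - c *: u.
  have hur : dotc u r = 0 by rewrite /r dotcBr dotcZr /c divfK // subrr.
  have hru : dotc r u = 0 by rewrite dotcC hur rmorph0.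
  apply: dotc_eq0; rewrite {2}/r dotcBr dotcZr hru mulr0 subr0.
  exact: s2.
have unz : u != 0 by apply: contra hu0 => /eqP ->; rewrite dotc0r.
have [a [a0 ua]] := normalize unz.
exists (a *: u); split => // j.
pose b := dotc u (lam j) / dotc u u / a.
have hj : lam j = b *: (a *: u) by rewrite scalerA /b divfK // -s3.
exists b; split => //.
have := hlam j; rewrite /unit_vec hj dotcZl dotcZr ua mulr1 mulrC -normCK.
by move/eqP; rewrite sqrp_eq1 // => /eqP.
Qed.
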